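(* Let $l_1$ be a sufficiently large perfect square and put $N_1 = 2^{\sqrt{l_1}}$. Define sequences $(N_j)_{j\ge 1}$ and $(l_j)_{j \ge 1}$ recursively by \[ N_{j+1} = \big(\lfloor \sqrt{N_j}\rfloor\big)! \quad\text{and}\quad l_{j+1} = l_j \cdot N_j \qquad (j \ge 1). \] Then \[ \lim_{j\to\infty} \frac{\log N_j}{\sqrt{l_j}} = 0 \quad\text{and}\quad \lim_{j\to\infty} \frac{\log N_j}{l_j^{\beta}} = \infty \ \text{ for every } \beta < 1/2. \] *)

(* Defs.v *)
From Stdlib Require Import Reals Arith.
From Coquelicot Require Import Coquelicot.

(* Nl l1 j = (N_{j+1}, l_{j+1}) in the paper's 1-based indexing:
   N_1 = 2^(sqrt l1), l_1 = l1,
   N_{j+1} = (floor (sqrt N_j))!,  l_{j+1} = l_j * N_j. *)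
Fixpoint Nl (l1 : nat) (j : nat) : nat * nat :=
  match j with
  | O => (2 ^ Nat.sqrt l1, l1)%nat
  | S j' => let p := Nl l1 j' in (fact (Nat.sqrt (fst p)), (snd p * fst p)%nat)
  end.

Definition Nseq (l1 j : nat) : nat := fst (Nl l1 j).
Definition lseq (l1 j : nat) : nat := snd (Nl l1 j).

(* Main.v *)
Require Import Defs.
From Stdlib Require Import Reals Arith Lia Lra.
From Coquelicot Require Import Coquelicot.

Lemma N_S l1 j : Nseq l1 (S j) = fact (Nat.sqrt (Nseq l1 j)).
Proof. reflexivity. Qed.
Lemma l_S l1 j : lseq l1 (S j) = (lseq l1 j * Nseq l1 j)%nat.
Proof. reflexivity. Qed.

Lemma fact_le_pow k : (fact k <= k ^ k)%nat.
Proof.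
  induction k as [|k IH]; simpl; [lia|].
  assert (k ^ k <= S k ^ k)%nat by (apply Nat.pow_le_mono_l; lia).
  nia.
Qed.

Lemma pow3_fact k : (7 <= k)%nat -> (3 ^ k <= fact k)%nat.
Proof.
  induction 1 as [|k Hk IH].
  - apply Nat.leb_le; vm_compute; reflexivity.
  - change (fact (S k)) with (S k * fact k)%nat. rewrite Nat.pow_succ_r'. nia.
Qed.

Lemma poly4_fact k : (7 <= k)%nat -> ((k+1) ^ 4 <= fact k)%nat.
Proof.
  induction 1 as [|k Hk IH].
  - apply Nat.leb_le; vm_compute; reflexivity.
  - change (fact (S k)) with (S k * fact k)%nat.
    assert (H2 : ((k+2)*(k+2) <= 2 * ((k+1)*(k+1)))%nat) by nia.
    assert (H4 : ((S k + 1) ^ 4 <= 4 * (k+1)^4)%nat).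
    { replace (S k + 1)%nat with (k+2)%nat by lia.
      change 4%nat with (2*2)%nat at 1 2.
      rewrite !Nat.pow_mul_r. simpl. nia. }
    nia.
Qed.

Lemma poly_fact d : forall V, exists K, forall k, (K <= k)%nat -> (V * (k+1)^d <= fact k)%nat.
Proof.
  induction d as [|d IH]; intros V.
  - exists (S V). intros k Hk. simpl.
    assert (k <= fact k)%nat.
    { destruct k; [lia|]. change (fact (S k)) with (S k * fact k)%nat.
      pose proof (lt_O_fact k). nia. }
    lia.
  - destruct (IH (V * 2 ^ (S d))%nat) as [K HK].
    exists (S K). intros k Hk. destruct k as [|k0]; [lia|].
    specialize (HK k0 ltac:(lia)).
    change (fact (S k0)) with (S k0 * fact k0)%nat.
    replace (k0 + 1)%nat with (S k0) in HK by lia.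
    assert (Hp : ((S k0 + 1) ^ S d <= 2 ^ S d * S k0 ^ S d)%nat).
    { rewrite <- Nat.pow_mul_l. apply Nat.pow_le_mono_l. lia. }
    rewrite Nat.pow_succ_r' in Hp. rewrite Nat.pow_succ_r'.
    rewrite (Nat.pow_succ_r' (S k0)) in Hp.
    nia.
Qed.

Lemma sq_le_pow2 m : (4 <= m)%nat -> (m * m <= 2 ^ m)%nat.
Proof.
  induction 1 as [|m Hm IH]; [simpl; lia|].
  rewrite Nat.pow_succ_r'. nia.
Qed.

Lemma inv l1 m : (6 <= m)%nat -> l1 = (m*m)%nat -> forall j,
  (64 <= Nseq l1 j /\ 1 <= lseq l1 j /\ lseq l1 j <= Nseq l1 j /\ j <= Nseq l1 j)%nat.
Proof.
  intros Hm Hl. induction j as [|j IH].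
  - unfold Nseq, lseq; simpl. rewrite Hl, Nat.sqrt_square.
    pose proof (sq_le_pow2 m ltac:(lia)).
    assert (2 ^ 6 <= 2 ^ m)%nat by (apply Nat.pow_le_mono_r; lia).
    simpl in H0. lia.
  - rewrite N_S, l_S. destruct IH as (H1 & H2 & H3 & H4).
    set (N := Nseq l1 j) in *. set (l := lseq l1 j) in *.
    pose proof (Nat.sqrt_spec N ltac:(lia)) as Hs.
    assert (Hk : (8 <= Nat.sqrt N)%nat).
    { change 8%nat with (Nat.sqrt 64). now apply Nat.sqrt_le_mono. }
    set (k := Nat.sqrt N) in *.
    pose proof (poly4_fact k ltac:(lia)).
    simpl in H. nia.
Qed.

Lemma ln_nonneg n : (1 <= n)%nat -> 0 <= ln (INR n).
Proof.
  intros H. rewrite <- ln_1. apply ln_le; [lra|]. apply (le_INR 1) in H. simpl in H. lra.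
Qed.

Lemma r_step l1 m j : (6 <= m)%nat -> l1 = (m*m)%nat ->
  ln (INR (Nseq l1 (S j))) / sqrt (INR (lseq l1 (S j))) <=
  (ln (INR (Nseq l1 j)) / sqrt (INR (lseq l1 j))) / 2.
Proof.
  intros Hm Hl. destruct (inv l1 m Hm Hl j) as (H1 & H2 & H3 & H4).
  rewrite N_S, l_S.
  set (N := Nseq l1 j) in *. set (l := lseq l1 j) in *.
  pose proof (Nat.sqrt_spec N ltac:(lia)) as Hs.
  assert (Hk : (8 <= Nat.sqrt N)%nat).
  { change 8%nat with (Nat.sqrt 64). now apply Nat.sqrt_le_mono. }
  set (k := Nat.sqrt N) in *.
  assert (Hkpos : 0 < INR k) by (apply lt_0_INR; lia).
  assert (Hf : ln (INR (fact k)) <= INR k * ln (INR k)).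
  { rewrite <- ln_pow by lra. apply ln_le. apply lt_0_INR, lt_O_fact.
    rewrite <- pow_INR. apply le_INR, fact_le_pow. }
  assert (HkN : INR k * INR k <= INR N) by (rewrite <- mult_INR; apply le_INR; lia).
  assert (Hks : INR k <= sqrt (INR N)).
  { rewrite <- (sqrt_square (INR k)) by lra. apply sqrt_le_1_alt. exact HkN. }
  assert (Hlk : 2 * ln (INR k) <= ln (INR N)).
  { replace 2 with (INR 2) by (simpl; lra). rewrite <- ln_pow by lra.
    apply ln_le. nra. simpl. lra. }
  assert (Hlk0 : 0 <= ln (INR k)) by (apply ln_nonneg; lia).
  rewrite mult_INR, sqrt_mult by (apply pos_INR).
  assert (Hsl : 0 < sqrt (INR l)) by (apply sqrt_lt_R0, lt_0_INR; lia).
  assert (HsN : 0 < sqrt (INR N)) by (apply sqrt_lt_R0, lt_0_INR; lia).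
  apply Rle_trans with ((sqrt (INR N) * (ln (INR N) / 2)) / (sqrt (INR l) * sqrt (INR N))).
  - unfold Rdiv. apply Rmult_le_compat_r.
    + left. apply Rinv_0_lt_compat. nra.
    + apply Rle_trans with (1 := Hf). apply Rmult_le_compat; lra.
  - right. field. lra.
Qed.

Lemma A_ge l1 m j : (6 <= m)%nat -> l1 = (m*m)%nat ->
  INR (Nat.sqrt (Nseq l1 j)) <= ln (INR (Nseq l1 (S j))).
Proof.
  intros Hm Hl. destruct (inv l1 m Hm Hl j) as (H1 & H2 & H3 & H4).
  rewrite N_S.
  assert (Hk : (8 <= Nat.sqrt (Nseq l1 j))%nat).
  { change 8%nat with (Nat.sqrt 64). now apply Nat.sqrt_le_mono. }
  set (k := Nat.sqrt (Nseq l1 j)) in *.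
  assert (H3p : 3 ^ k <= INR (fact k)).
  { replace 3 with (INR 3) by (simpl; lra). rewrite <- pow_INR.
    apply le_INR, pow3_fact. lia. }
  assert (Hl3 : 1 <= ln 3).
  { rewrite <- (ln_exp 1). apply ln_le. apply exp_pos. apply exp_le_3. }
  apply ln_le in H3p; [|apply pow_lt; lra].
  rewrite ln_pow in H3p by lra.
  pose proof (pos_INR k). nra.
Qed.

Lemma nat_chain l1 m W d K i' : (6 <= m)%nat -> l1 = (m*m)%nat ->
  (forall k, (K <= k)%nat -> (4 ^ S d * W * (k+1)^(4*d) <= fact k)%nat) ->
  (K * K <= i')%nat ->
  (W * lseq l1 (S (S i')) ^ d <= Nat.sqrt (Nseq l1 (S i')) ^ (2 * S d))%nat.
Proof.
  intros Hm Hl HK Hi.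
  destruct (inv l1 m Hm Hl i') as (A1 & A2 & A3 & A4).
  destruct (inv l1 m Hm Hl (S i')) as (B1 & B2 & B3 & B4).
  rewrite l_S. rewrite l_S in *. rewrite N_S in *.
  set (N' := Nseq l1 i') in *. set (l' := lseq l1 i') in *.
  pose proof (Nat.sqrt_spec N' ltac:(lia)) as Hs'.
  set (k' := Nat.sqrt N') in *.
  assert (HKk : (K <= k')%nat).
  { rewrite <- (Nat.sqrt_square K). apply Nat.sqrt_le_mono. lia. }
  specialize (HK k' HKk).
  assert (Hli : (l' * N' <= (k'+1)^4)%nat) by (simpl; nia).
  assert (Hld : ((l' * N')^d <= (k'+1)^(4*d))%nat).
  { rewrite Nat.pow_mul_r. apply Nat.pow_le_mono_l. exact Hli. }
  set (Ni := fact k') in *. set (li := (l' * N')%nat) in *.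
  pose proof (Nat.sqrt_spec Ni ltac:(lia)) as Hs.
  assert (Hk : (8 <= Nat.sqrt Ni)%nat).
  { change 8%nat with (Nat.sqrt 64). now apply Nat.sqrt_le_mono. }
  set (k := Nat.sqrt Ni) in *.
  assert (HN4 : (Ni <= 4 * (k*k))%nat) by nia.
  assert (Hc : (4 ^ S d * W * li ^ d <= Ni)%nat).
  { apply Nat.le_trans with (2 := HK). apply Nat.mul_le_mono_l. exact Hld. }
  rewrite Nat.pow_succ_r' in Hc.
  rewrite Nat.pow_mul_l.
  assert (HNd : (Ni ^ d <= 4 ^ d * (k*k) ^ d)%nat).
  { rewrite <- Nat.pow_mul_l. apply Nat.pow_le_mono_l. lia. }
  rewrite Nat.pow_mul_r. rewrite Nat.pow_succ_r'.
  replace (k ^ 2)%nat with (k*k)%nat by (simpl; lia).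
  generalize dependent (li ^ d)%nat; generalize dependent (Ni ^ d)%nat;
  generalize dependent (4 ^ d)%nat; generalize dependent ((k*k)^d)%nat; intros.
  assert (H5 : (n0 * W * n2 <= k * k)%nat) by lia.
  apply Nat.le_trans with (W * (n2 * (n0 * n)))%nat.
  { apply Nat.mul_le_mono_l, Nat.mul_le_mono_l. exact HNd. }
  replace (W * (n2 * (n0 * n)))%nat with ((n0 * W * n2) * n)%nat by ring.
  apply Nat.mul_le_mono_r. exact H5.
Qed.

Theorem lemma3p1 :
  exists L : nat, forall l1 : nat, (L <= l1)%nat -> (exists m : nat, l1 = (m * m)%nat) ->
    is_lim_seq (fun j => (ln (INR (Nseq l1 j)) / sqrt (INR (lseq l1 j)))%R) 0%R /\
    (forall beta : R, (beta < 1 / 2)%R ->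
       is_lim_seq (fun j => (ln (INR (Nseq l1 j)) / Rpower (INR (lseq l1 j)) beta)%R) p_infty).
Proof.
  exists 36%nat. intros l1 HL [m Hl].
  assert (Hm : (6 <= m)%nat) by nia.
  split.
  - set (r := fun j => ln (INR (Nseq l1 j)) / sqrt (INR (lseq l1 j))).
    assert (Hr0 : forall j, 0 <= r j).
    { intros j. destruct (inv l1 m Hm Hl j) as (H1 & H2 & H3 & H4). unfold r.
      unfold Rdiv. apply Rmult_le_pos. apply ln_nonneg; lia.
      left. apply Rinv_0_lt_compat, sqrt_lt_R0, lt_0_INR. lia. }
    assert (Hb : forall j, r j <= r 0%nat * (1/2) ^ j).
    { induction j as [|j IH]. simpl; lra.
      pose proof (r_step l1 m j Hm Hl). fold (r j) (r (S j)) in H. simpl. lra. }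
    apply is_lim_seq_le_le with (u := fun _ => 0) (w := fun j => r 0%nat * (1/2)^j).
    + intros n. split; [apply Hr0|apply Hb].
    + apply is_lim_seq_const.
    + assert (H := is_lim_seq_scal_l _ (r 0%nat) 0 (is_lim_seq_geom (1/2) ltac:(rewrite Rabs_pos_eq; lra))).
      simpl in H. rewrite Rmult_0_r in H. exact H.
  - intros beta Hbeta.
    destruct (INR_unbounded (/ (1 - 2 * beta))) as [d Hd].
    assert (Hd1 : INR d * (1 - 2*beta) > 1).
    { assert (H := Rmult_gt_compat_r (1 - 2*beta) _ _ ltac:(lra) Hd).
      rewrite Rinv_l in H by lra. lra. }
    pose proof (pos_INR d) as Hd0.
    set (q := INR d / (2 * INR (S d))).
    assert (Hq : beta <= q).
    { unfold q. rewrite S_INR. apply (Rmult_le_reg_r (2 * (INR d + 1))). lra.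
      unfold Rdiv. rewrite Rmult_assoc, Rinv_l by lra. nra. }
    apply is_lim_seq_spec. intros M.
    set (M' := Rmax M 1).
    assert (HM1 : 1 <= M') by apply Rmax_r.
    assert (HMM : M <= M') by apply Rmax_l.
    destruct (INR_unbounded (M' ^ (2 * S d))) as [W HW].
    destruct (poly_fact (4*d) (4 ^ S d * W)%nat) as [K HK].
    exists (K * K + 2)%nat. intros j Hj.
    destruct j as [|[|i']]; [lia|lia|].
    assert (Hi : (K * K <= i')%nat) by lia.
    pose proof (nat_chain l1 m W d K i' Hm Hl HK Hi) as Hc.
    pose proof (A_ge l1 m (S i') Hm Hl) as HA.
    destruct (inv l1 m Hm Hl (S (S i'))) as (H1 & H2 & H3 & H4).
    set (k := Nat.sqrt (Nseq l1 (S i'))) in *.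
    set (A := ln (INR (Nseq l1 (S (S i'))))) in *.
    set (lj := lseq l1 (S (S i'))) in *.
    assert (Hlj : 1 <= INR lj) by (apply (le_INR 1) in H2; simpl in H2; lra).
    assert (HP : 0 < Rpower (INR lj) beta) by (unfold Rpower; apply exp_pos).
    assert (HPq : 0 < Rpower (INR lj) q) by (unfold Rpower; apply exp_pos).
    assert (HPP : Rpower (INR lj) beta <= Rpower (INR lj) q) by (apply Rle_Rpower; lra).
    assert (Hpow : Rpower (INR lj) q ^ (2 * S d) = INR lj ^ d).
    { rewrite <- Rpower_pow by exact HPq. rewrite Rpower_mult.
      rewrite <- Rpower_pow by lra. f_equal. unfold q. rewrite mult_INR.
      simpl (INR 2). field. rewrite S_INR. lra. }
    assert (Hkey : M' * Rpower (INR lj) q < A).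
    { apply Rnot_le_lt. intros Hle.
      assert (HA0 : 0 <= INR k) by apply pos_INR.
      assert (Hx : A ^ (2 * S d) <= (M' * Rpower (INR lj) q) ^ (2 * S d)).
      { apply pow_incr. lra. }
      rewrite Rpow_mult_distr, Hpow in Hx.
      assert (Hy : INR k ^ (2 * S d) <= A ^ (2 * S d)) by (apply pow_incr; lra).
      apply le_INR in Hc. rewrite mult_INR, !pow_INR in Hc.
      assert (Hld : 0 < INR lj ^ d) by (apply pow_lt; lra).
      assert (M' ^ (2 * S d) * INR lj ^ d < INR W * INR lj ^ d).
      { apply Rmult_lt_compat_r; lra. }
      lra. }
    apply (Rmult_lt_reg_r (Rpower (INR lj) beta)); [exact HP|].
    unfold Rdiv. rewrite Rmult_assoc, Rinv_l by lra. rewrite Rmult_1_r.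
    apply Rle_lt_trans with (M' * Rpower (INR lj) beta).
    + apply Rmult_le_compat_r; lra.
    + apply Rle_lt_trans with (M' * Rpower (INR lj) q); [apply Rmult_le_compat_l; lra|exact Hkey].
Qed.
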